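(* An affine system $(X,\kappa,A)$ is sober if and only if there exist a set $I$ and an embedding $(f,\varphi):(X,\kappa,A)\to\mathsf{S}^I$ in $\mathbf{Sys}(L)$ which is sober, i.e. such that for every $p\in Pt_L(A)$ and every $y\in|L|^I$ with $p\circ\varphi=\ell_{\mathsf{S}^I}(y)$ there exists $x\in X$ with $\ell(x)=p$ and $f(x)=y$.
   Context: Fix a variety $\mathbf{A}$ of algebras (a full subcategory of the category of $\Omega$-algebras and homomorphisms closed under products, subalgebras and homomorphic images), which has all set-indexed coproducts $(A_i\xrightarrow{\mu_i}\coprod_iA_i)_i$ and a free algebra $S$ over a singleton $\{*\}$ with universal map $\eta:\{*\}\to|S|$; for an algebra $A$ and $a\in A$ let $\overline{a}^A:S\to A$ be the unique homomorphism with $\eta( * )\mapsto a$. Fix an $\mathbf{A}$-algebra $L$; $L^X$ is the power algebra. An affine system is $(X,\kappa,A)$ with $X$ a set, $A$ an algebra, $\kappa:A\to L^X$ a homomorphism; a morphism $(f,\varphi):(X_1,\kappa_1,A_1)\to(X_2,\kappa_2,A_2)$ is a map $f:X_1\to X_2$ with a homomorphism $\varphi:A_2\to A_1$ such that $\kappa_1(\varphi(a))(x)=\kappa_2(a)(f(x))$ for all $a\in A_2,x\in X_1$; composition $(g,\psi)\circ(f,\varphi)=(g\circ f,\varphi\circ\psi)$; this is $\mathbf{Sys}(L)$. A morphism $(f,\varphi):(X_1,\kappa_1,A_1)\to(X_2,\kappa_2,A_2)$ is initial if for every system $(Y,\sigma,B)$ and pair of a map $g:Y\to X_1$ and homomorphism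 $\psi:A_1\to B$ such that $(f\circ g,\psi\circ\varphi)$ is a morphism, $(g,\psi)$ is a morphism; an embedding is an initial morphism with $f$ injective and $\varphi$ an epimorphism in $\mathbf{A}$. For an algebra $A$, $Pt_L(A)$ is the set of homomorphisms $A\to L$. For a system $(X,\kappa,A)$, $\ell:X\to Pt_L(A)$ is $\ell(x)(a)=\kappa(a)(x)$; the system is sober if $\ell$ is bijective. The Sierpinski affine system is $\mathsf{S}=(|L|,\kappa_S,S)$ with $\kappa_S:S\to L^{|L|}$ the unique homomorphism with $\kappa_S(s)(a)=\overline{a}^L(s)$ (equivalently $\kappa_S(\eta( * ))=\mathrm{id}_L$). The power $\mathsf{S}^I$ is the product $(|L|^I,\theta,\coprod_IS)$ with $\theta(\mu_i(s))(x)=\kappa_S(s)(x_i)$, and $\ell_{\mathsf{S}^I}$ is its map $|L|^I\to Pt_L(\coprod_IS)$. *)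

(* Defs.v *)
From Stdlib Require Import FunctionalExtensionality.
Unset Implicit Arguments.
Unset Strict Implicit.

Record signature := Signature { op_sym : Type; arity : op_sym -> Type }.
Arguments arity {s} o.

Section UA.
Variable Sg : signature.

Record algebra := Algebra {
  carrier :> Type;
  ops : forall o : op_sym Sg, (arity o -> carrier) -> carrier }.
Arguments ops a o args.

Definition is_hom {A B : algebra} (f : A -> B) : Prop :=
  forall (o : op_sym Sg) (args : arity o -> A),
    f (ops A o args) = ops B o (fun k => f (args k)).

Definition prod_alg {J : Type} (F : J -> algebra) : algebra :=
  @Algebra (forall j, F j) (fun o args j => ops (F j) o (fun k => args k j)).

Definition power_alg (L : algebra) (X : Type) : algebra := prod_alg (fun _ : X => L).

Definition op_closed {A : algebra} (P : A -> Prop) : Prop :=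
  forall o (args : arity o -> A), (forall k, P (args k)) -> P (ops A o args).

Definition sub_alg {A : algebra} {P : A -> Prop} (HP : op_closed P) : algebra :=
  @Algebra {x : A | P x}
    (fun o args => exist _ (ops A o (fun k => proj1_sig (args k)))
                     (HP o _ (fun k => proj2_sig (args k)))).

Record variety (V : algebra -> Prop) : Prop := {
  var_prod : forall (J : Type) (F : J -> algebra), (forall j, V (F j)) -> V (prod_alg F);
  var_sub : forall (A : algebra) (P : A -> Prop) (HP : op_closed P), V A -> V (sub_alg HP);
  var_img : forall (A B : algebra) (f : A -> B), is_hom f ->
              (forall b, exists a, f a = b) -> V A -> V B }.

Record coproduct (V : algebra -> Prop) (I : Type) (F : I -> algebra) := {
  cp_alg : algebra;
  cp_in : V cp_alg;
  cp_inj : forall i, F i -> cp_alg;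
  cp_inj_hom : forall i, is_hom (cp_inj i);
  cp_pair : forall B : algebra, V B -> (forall i, F i -> B) -> cp_alg -> B;
  cp_pair_hom : forall (B : algebra) (HB : V B) (g : forall i, F i -> B),
      (forall i, is_hom (g i)) -> is_hom (cp_pair B HB g);
  cp_pair_inj : forall (B : algebra) (HB : V B) (g : forall i, F i -> B),
      (forall i, is_hom (g i)) -> forall i s, cp_pair B HB g (cp_inj i s) = g i s;
  cp_pair_uniq : forall (B : algebra) (HB : V B) (g : forall i, F i -> B),
      (forall i, is_hom (g i)) -> forall h : cp_alg -> B, is_hom h ->
      (forall i s, h (cp_inj i s) = g i s) -> forall c, h c = cp_pair B HB g c }.
Arguments cp_alg {V I F} _.
Arguments cp_in {V I F} _.
Arguments cp_inj {V I F} _ i.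
Arguments cp_pair {V I F} _ B HB g.
Arguments cp_pair_hom {V I F} _ B HB g.

(* a chosen free V-algebra over a singleton {*}, with eta( * ) = fr_eta *)
Record free1 (V : algebra -> Prop) := {
  fr_alg : algebra;
  fr_in : V fr_alg;
  fr_eta : fr_alg;
  fr_ext : forall B : algebra, V B -> B -> fr_alg -> B;
  fr_ext_hom : forall (B : algebra) (HB : V B) (b : B), is_hom (fr_ext B HB b);
  fr_ext_eta : forall (B : algebra) (HB : V B) (b : B), fr_ext B HB b fr_eta = b;
  fr_ext_uniq : forall (B : algebra) (HB : V B) (b : B) (h : fr_alg -> B),
      is_hom h -> h fr_eta = b -> forall s, h s = fr_ext B HB b s }.
Arguments fr_alg {V} _.
Arguments fr_in {V} _.
Arguments fr_eta {V} _.
Arguments fr_ext {V} _ B HB b.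
Arguments fr_ext_hom {V} _ B HB b.

Section Systems.
Variable V : algebra -> Prop.
Variable L : algebra.

Record system := System {
  sys_pts : Type;
  sys_alg : algebra;
  sys_alg_in : V sys_alg;
  sys_kappa : sys_alg -> power_alg L sys_pts;
  sys_kappa_hom : is_hom sys_kappa }.

Definition is_morphism (s1 s2 : system) (f : sys_pts s1 -> sys_pts s2)
    (phi : sys_alg s2 -> sys_alg s1) : Prop :=
  is_hom phi /\
  forall (a : sys_alg s2) (x : sys_pts s1), sys_kappa s1 (phi a) x = sys_kappa s2 a (f x).

Definition is_initial (s1 s2 : system) (f : sys_pts s1 -> sys_pts s2)
    (phi : sys_alg s2 -> sys_alg s1) : Prop :=
  forall (t : system) (g : sys_pts t -> sys_pts s1) (psi : sys_alg s1 -> sys_alg t),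
    is_hom psi ->
    is_morphism t s2 (fun y => f (g y)) (fun a => psi (phi a)) ->
    is_morphism t s1 g psi.

Definition is_epi {A B : algebra} (phi : A -> B) : Prop :=
  forall (C : algebra), V C -> forall h1 h2 : B -> C, is_hom h1 -> is_hom h2 ->
    (forall a, h1 (phi a) = h2 (phi a)) -> forall b, h1 b = h2 b.

Definition is_embedding (s1 s2 : system) (f : sys_pts s1 -> sys_pts s2)
    (phi : sys_alg s2 -> sys_alg s1) : Prop :=
  is_morphism s1 s2 f phi /\ is_initial s1 s2 f phi /\
  (forall x x', f x = f x' -> x = x') /\ is_epi phi.

Definition is_point {A : algebra} (p : A -> L) : Prop := is_hom p.

Definition ell {s : system} (x : sys_pts s) : sys_alg s -> L :=
  fun a => sys_kappa s a x.

Definition sober (s : system) : Prop :=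
  (forall x x' : sys_pts s, (forall a, ell x a = ell x' a) -> x = x') /\
  (forall p : sys_alg s -> L, is_point p -> exists x, forall a, ell x a = p a).

End Systems.

Section Sierpinski.
Variable V : algebra -> Prop.
Variable L : algebra.
Hypothesis HL : V L.
Variable FS : free1 V.

Definition kappa_S (s : fr_alg FS) : power_alg L L := fun a => fr_ext FS L HL a s.

Lemma kappa_S_hom : is_hom kappa_S.
Proof.
  intros o args. unfold kappa_S, power_alg, prod_alg; simpl. apply functional_extensionality; intro a.
  simpl. apply (fr_ext_hom FS L HL a).
Qed.

Definition sierpinski : system V L :=
  @System V L L (fr_alg FS) (fr_in FS) kappa_S kappa_S_hom.

Variable cop : forall I : Type, coproduct V I (fun _ : I => fr_alg FS).

(* theta : coprod_I S -> L^(|L|^I), theta(mu_i(s))(x) = kappa_S(s)(x_i);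
   componentwise, theta(c)(x) = [ s |-> kappa_S(s)(x_i) ]_i (c) *)
Definition theta (I : Type) (c : cp_alg (cop I)) : power_alg L (I -> L) :=
  fun x => cp_pair (cop I) L HL (fun i s => kappa_S s (x i)) c.

Lemma theta_hom (I : Type) : is_hom (@theta I).
Proof.
  intros o args. unfold theta, power_alg, prod_alg; simpl. apply functional_extensionality; intro x.
  simpl. apply (cp_pair_hom (cop I) L HL).
  intros i o' args'. unfold kappa_S. apply (fr_ext_hom FS L HL).
Qed.

Definition sierpinski_pow (I : Type) : system V L :=
  @System V L (I -> L) (cp_alg (cop I)) (cp_in (cop I)) (@theta I) (@theta_hom I).

End Sierpinski.
End UA.

Arguments algebra : clear implicits.
Arguments variety {Sg} V.
Arguments free1 {Sg} V.
Arguments fr_alg {Sg V} _.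
Arguments coproduct {Sg} V I F.
Arguments cp_alg {Sg V I F} _.
Arguments system {Sg} V L.
Arguments sys_pts {Sg V L} _.
Arguments sys_alg {Sg V L} _.
Arguments sys_kappa {Sg V L} _ _.
Arguments sober {Sg V L} s.
Arguments is_embedding {Sg V L} s1 s2 f phi.
Arguments is_point {Sg L A} p.
Arguments ell {Sg V L s} x a.
Arguments sierpinski_pow {Sg V L} HL FS cop I.
Arguments sierpinski {Sg V L} HL FS.

(* Main.v *)
Require Import Defs.
From Stdlib Require Import FunctionalExtensionality.

Lemma kappa_eval_hom (Sg : signature) (V : algebra Sg -> Prop) (L : algebra Sg)
  (s : system V L) (x : sys_pts s) :
  is_hom Sg (fun a : sys_alg s => sys_kappa s a x).
Proof.
  intros o args. pose proof (sys_kappa_hom Sg V L s o args) as H.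
  exact (f_equal (fun F => F x) H).
Qed.

Lemma comp_hom (Sg : signature) (A B C : algebra Sg) (f : A -> B) (g : B -> C) :
  is_hom Sg f -> is_hom Sg g -> is_hom Sg (fun a => g (f a)).
Proof.
  intros Hf Hg o args. rewrite Hf, Hg. reflexivity.
Qed.

Lemma hom_theta (Sg : signature) (V : algebra Sg -> Prop)
  (L : algebra Sg) (HL : V L) (FS : free1 V)
  (cop : forall I : Type, coproduct V I (fun _ : I => fr_alg FS)) (I : Type)
  (h : cp_alg (cop I) -> L) (y : I -> L) :
  is_hom Sg h -> (forall i, h (cp_inj Sg V I _ (cop I) i (fr_eta Sg V FS)) = y i) ->
  forall c, h c = theta Sg V L HL FS cop I c y.
Proof.
  intros Hh Hy c. unfold theta.
  apply (cp_pair_uniq Sg V I _ (cop I) L HL (fun i s => kappa_S Sg V L HL FS s (y i))).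
  - intros i o args. unfold kappa_S. apply (fr_ext_hom Sg V FS L HL).
  - exact Hh.
  - intros i s. unfold kappa_S.
    apply (fr_ext_uniq Sg V FS L HL (y i) (fun s => h (cp_inj Sg V I _ (cop I) i s))).
    + apply (comp_hom Sg _ _ _ (cp_inj Sg V I _ (cop I) i) h). apply (cp_inj_hom Sg V I _ (cop I)). exact Hh.
    + apply Hy.
Qed.

Lemma theta_mu (Sg : signature) (V : algebra Sg -> Prop)
  (L : algebra Sg) (HL : V L) (FS : free1 V)
  (cop : forall I : Type, coproduct V I (fun _ : I => fr_alg FS)) (I : Type)
  (y : I -> L) (i : I) :
  theta Sg V L HL FS cop I (cp_inj Sg V I _ (cop I) i (fr_eta Sg V FS)) y = y i.
Proof.
  unfold theta. rewrite (cp_pair_inj Sg V I _ (cop I) L HL).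
  - unfold kappa_S. apply fr_ext_eta.
  - intros j o args. unfold kappa_S. apply (fr_ext_hom Sg V FS L HL).
Qed.

Theorem theorem5 (Sg : signature) (V : algebra Sg -> Prop) (HV : variety V)
  (L : algebra Sg) (HL : V L) (FS : free1 V)
  (cop : forall I : Type, coproduct V I (fun _ : I => fr_alg FS))
  (s : system V L) :
  sober s <->
  exists (I : Type) (f : sys_pts s -> (I -> L))
         (phi : cp_alg (cop I) -> sys_alg s),
    is_embedding s (sierpinski_pow HL FS cop I) f phi /\
    (forall (p : sys_alg s -> L), is_point p ->
     forall y : I -> L,
       (forall c, p (phi c) = @ell _ _ _ (sierpinski_pow HL FS cop I) y c) ->
       exists x : sys_pts s, (forall a, @ell _ _ _ s x a = p a) /\ f x = y).
Proof.
  split.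
  - intros [Hinj Hsurj].
    set (I := sys_alg s).
    set (A := sys_alg s).
    set (phi := cp_pair Sg V I _ (cop I) A (sys_alg_in Sg V L s)
                  (fun a t => fr_ext Sg V FS A (sys_alg_in Sg V L s) a t)).
    assert (Hgh : forall i : I, is_hom Sg (fr_ext Sg V FS A (sys_alg_in Sg V L s) i)).
    { intros i. apply fr_ext_hom. }
    assert (Hphih : is_hom Sg phi).
    { apply (cp_pair_hom Sg V I _ (cop I)). exact Hgh. }
    assert (Hphimu : forall a : I, phi (cp_inj Sg V I _ (cop I) a (fr_eta Sg V FS)) = a).
    { intros a. unfold phi. rewrite (cp_pair_inj Sg V I _ (cop I)) by exact Hgh.
      apply fr_ext_eta. }
    exists I, (fun x a => sys_kappa s a x), phi.
    assert (Hmor : forall (c : cp_alg (cop I)) (x : sys_pts s),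
               sys_kappa s (phi c) x = theta Sg V L HL FS cop I c (fun a => sys_kappa s a x)).
    { intros c x.
      apply (hom_theta Sg V L HL FS cop I (fun c => sys_kappa s (phi c) x)).
      - apply (comp_hom Sg _ _ _ phi (fun a => sys_kappa s a x)). exact Hphih. apply kappa_eval_hom.
      - intros i. simpl. rewrite Hphimu. reflexivity. }
    split; [split; [|split; [|split]]|].
    + split. exact Hphih. exact Hmor.
    + intros t g psi Hpsi [_ Hm]. split. exact Hpsi.
      intros a y. specialize (Hm (cp_inj Sg V I _ (cop I) a (fr_eta Sg V FS)) y).
      simpl in Hm. rewrite Hphimu in Hm. rewrite Hm. apply theta_mu.
    + intros x x' Hxx'. apply Hinj. intros a. unfold ell.
      exact (f_equal (fun F => F a) Hxx').
    + intros C HC h1 h2 _ _ H b. rewrite <- (Hphimu b). apply H.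
    + intros p Hp y Hy. destruct (Hsurj p Hp) as [x Hx]. exists x. split. exact Hx.
      apply functional_extensionality. intros a.
      specialize (Hx a). unfold ell in Hx. rewrite Hx.
      specialize (Hy (cp_inj Sg V I _ (cop I) a (fr_eta Sg V FS))).
      rewrite Hphimu in Hy. rewrite Hy. unfold ell. simpl. apply theta_mu.
  - intros [I [f [phi [[[Hphih Hmor] [_ [Hfinj _]]] Hsob]]]].
    split.
    + intros x x' Hxx'. apply Hfinj. apply functional_extensionality. intros i.
      rewrite <- (theta_mu Sg V L HL FS cop I (f x) i).
      rewrite <- (theta_mu Sg V L HL FS cop I (f x') i).
      simpl in Hmor. rewrite <- !Hmor. apply Hxx'.
    + intros p Hp.
      set (y := fun i => p (phi (cp_inj Sg V I _ (cop I) i (fr_eta Sg V FS)))).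
      destruct (Hsob p Hp y) as [x [Hx _]].
      * intros c. unfold ell. simpl.
        apply (hom_theta Sg V L HL FS cop I (fun c => p (phi c)) y).
        -- apply (comp_hom Sg _ _ _ phi p). exact Hphih. exact Hp.
        -- intros i. reflexivity.
      * exists x. exact Hx.
Qed.
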